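(* Let $\theta=\sqrt{5-\pi^2/3}$. For all $x\in[-2,0)$, $$g(x):=2x-2x^2-\frac43x^3+\frac75\theta\big(-x^2-2x\big)^{3/2}<0.$$ *)

(* Defs.v *)
From Stdlib Require Import Reals.
Open Scope R_scope.

Definition theta : R := sqrt (5 - PI ^ 2 / 3).

(* u^(3/2) for u >= 0, written as (sqrt u)^3 (Rpower needs u > 0, and u = 0 at x = -2). *)
Definition pow32 (u : R) : R := (sqrt u) ^ 3.

Definition g (x : R) : R :=
  2 * x - 2 * x ^ 2 - 4 / 3 * x ^ 3 + 7 / 5 * theta * pow32 (- x ^ 2 - 2 * x).

(* Main.v *)
Require Import Defs.
From Stdlib Require Import Reals.
From Stdlib Require Import Lra Psatz.
Open Scope R_scope.

Lemma PIgt : 31/10 < PI.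
Proof.
assert (31/20 < PI/2); [|lra].
apply PI2_lower_bound;[split; lra | ].
destruct (pre_cos_bound (31/20) 1) as [t _]; [lra | lra | ].
apply Rlt_le_trans with (2 := t); clear t.
unfold cos_approx; simpl; unfold cos_term.
rewrite !INR_IZR_INZ.
cbv -[IZR].
field_simplify.
apply Rdiv_lt_0_compat ; now apply IZR_lt.
Qed.

Lemma Ppoly (t:R): 0 < t <= 2 -> 353/100 * t*(2-t)^3 < (2+2*t-4/3*t^2)^2.
Proof. intros.
pose proof (pow2_ge_0 (t-2/5)). pose proof (pow2_ge_0 (t^2-t-1)).
assert (0 <= t*(2-t)) by nra.
assert (0 <= t*(2-t)*(t-2/5)^2) by nra.
nra. Qed.

Lemma theta_sq : 0 <= theta /\ (49/25) * theta^2 < 353/100.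
Proof.
unfold theta. split; [apply sqrt_pos|].
pose proof PIgt.
destruct (Rle_dec 0 (5 - PI^2/3)) as [h|h].
- rewrite pow2_sqrt by exact h. nra.
- rewrite sqrt_neg_0 by lra. lra.
Qed.

Theorem lemmaA1 : forall x : R, -2 <= x < 0 -> g x < 0.
Proof.
  intros x Hx. unfold g, pow32.
  set (t := - x).
  assert (Ht : 0 < t <= 2) by (unfold t; lra).
  replace (- x ^ 2 - 2 * x) with (t * (2 - t)) by (unfold t; ring).
  set (u := t * (2 - t)).
  assert (Hu : 0 <= u) by (unfold u; nra).
  set (s := sqrt u).
  assert (Hs : 0 <= s) by apply sqrt_pos.
  assert (Hs2 : s ^ 2 = u) by (apply pow2_sqrt; exact Hu).
  destruct theta_sq as [Th1 Th2].
  set (A := 7/5 * theta * s^3).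
  set (B := 2*t + 2*t^2 - 4/3*t^3).
  assert (HA : 0 <= A) by (unfold A; apply Rmult_le_pos; [lra| apply pow_le; exact Hs]).
  assert (HQ : 0 < 2+2*t-4/3*t^2) by nra.
  assert (HB : B = t * (2+2*t-4/3*t^2)) by (unfold B; ring).
  assert (HBp : 0 < B) by (rewrite HB; apply Rmult_lt_0_compat; lra).
  assert (HA2 : A^2 = (49/25 * theta^2) * (t^2 * (t*(2-t)^3))).
  { unfold A. clearbody s. replace ((7/5*theta*s^3)^2) with (49/25*theta^2*(s^2)^3) by field.
    rewrite Hs2. unfold u. ring. }
  assert (HP := Ppoly t Ht).
  assert (Hk : 0 <= t*(2-t)^3).
  { apply Rmult_le_pos; [lra| apply pow_le; lra]. }
  assert (Ht2 : 0 < t^2) by nra.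
  assert (HAB : A^2 < B^2).
  { rewrite HA2, HB.
    apply Rle_lt_trans with (353/100 * (t^2 * (t*(2-t)^3))).
    - apply Rmult_le_compat_r; [apply Rmult_le_pos; lra| lra].
    - replace ((t * (2 + 2 * t - 4 / 3 * t ^ 2)) ^ 2) with (t^2 * (2 + 2 * t - 4 / 3 * t ^ 2)^2) by ring.
      replace (353/100 * (t^2 * (t*(2-t)^3))) with (t^2 * (353/100 * t*(2-t)^3)) by ring.
      apply Rmult_lt_compat_l; lra. }
  assert (A < B) by nra.
  match goal with |- ?L < 0 => assert (HL : L = A - B) end.
  { unfold A, B, t. ring. }
  rewrite HL. lra.
Qed.
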